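(* Let $\Omega$ be an open subset of $\mathbb{H}$ such that, for every $I\in\mathbb{S}$, $\Omega_I=\Omega\cap L_I$ is an angle $\{re^{I(\zeta_I+\vartheta)}: r>0,\ |\vartheta|<\varphi_I/2\}$ with $\zeta_I\in\mathbb{R}$ and $0<\varphi_I<2\pi$. If the maps $\mathbb{S}\to\mathbb{R}$, $I\mapsto\zeta_I$ and $I\mapsto\varphi_I$ are continuous, then $\Omega$ is a slice domain.
   Context: $\mathbb{H}$ denotes the quaternions; $\mathbb{S}=\{ix_1+jx_2+kx_3: x_1^2+x_2^2+x_3^2=1\}$ (a 2-sphere); for $I\in\mathbb{S}$, $L_I=\mathbb{R}+\mathbb{R}I$ and $e^{I\vartheta}=\cos\vartheta+I\sin\vartheta$. A domain $\Omega\subseteq\mathbb{H}$ is a slice domain if $\Omega\cap\mathbb{R}\ne\emptyset$ and $\Omega\cap L_I$ is a domain (open connected set) in $L_I$ for every $I\in\mathbb{S}$. (Here ''slice domain'' is understood to include that $\Omega$ is a domain.) *)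

(* Defs.v *)
From Stdlib Require Import Reals.
Open Scope R_scope.

(* Quaternions q = q0 + i q1 + j q2 + k q3 (only the real vector-space
   structure and the Euclidean metric are needed here). *)
Record quat : Type := mkH { q0 : R; q1 : R; q2 : R; q3 : R }.

Definition qadd (p q : quat) : quat :=
  mkH (q0 p + q0 q) (q1 p + q1 q) (q2 p + q2 q) (q3 p + q3 q).
Definition qscal (a : R) (q : quat) : quat :=
  mkH (a * q0 q) (a * q1 q) (a * q2 q) (a * q3 q).
Definition qreal (a : R) : quat := mkH a 0 0 0.

Definition qdist (p q : quat) : R :=
  sqrt ((q0 p - q0 q)^2 + (q1 p - q1 q)^2 + (q2 p - q2 q)^2 + (q3 p - q3 q)^2).

Definition in_S (I : quat) : Prop :=
  q0 I = 0 /\ q1 I ^ 2 + q2 I ^ 2 + q3 I ^ 2 = 1.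

Definition L (I : quat) (q : quat) : Prop :=
  exists a b : R, q = qadd (qreal a) (qscal b I).

(* r e^{I t} = r cos t + r sin t I *)
Definition rexpI (r : R) (I : quat) (t : R) : quat :=
  qadd (qreal (r * cos t)) (qscal (r * sin t) I).

Definition is_real_q (q : quat) : Prop := q1 q = 0 /\ q2 q = 0 /\ q3 q = 0.

Definition open_H (A : quat -> Prop) : Prop :=
  forall q, A q -> exists eps, 0 < eps /\ forall p, qdist p q < eps -> A p.

Definition open_in (X A : quat -> Prop) : Prop :=
  (forall q, A q -> X q) /\
  forall q, A q -> exists eps, 0 < eps /\
    forall p, X p -> qdist p q < eps -> A p.

Definition connected_H (A : quat -> Prop) : Prop :=
  forall U V : quat -> Prop, open_H U -> open_H V ->
    (forall q, A q -> U q \/ V q) ->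
    (forall q, A q -> U q -> V q -> False) ->
    (exists q, A q /\ U q) -> (exists q, A q /\ V q) -> False.

Definition domain_H (A : quat -> Prop) : Prop := open_H A /\ connected_H A.

Definition domain_in_L (I : quat) (A : quat -> Prop) : Prop :=
  open_in (L I) (fun q => A q /\ L I q) /\ connected_H (fun q => A q /\ L I q).

Definition slice_domain (Omega : quat -> Prop) : Prop :=
  domain_H Omega /\
  (exists q, Omega q /\ is_real_q q) /\
  (forall I, in_S I -> domain_in_L I Omega).

Definition continuous_on_S (f : quat -> R) : Prop :=
  forall I, in_S I -> forall eps, 0 < eps -> exists delta, 0 < delta /\
    forall J, in_S J -> qdist J I < delta -> Rabs (f J - f I) < eps.

(* Main.v *)
Require Import Defs.
From Stdlib Require Import Reals.
Open Scope R_scope.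
From Stdlib Require Import Lra Classical.

Lemma cont_eps (f : R -> R) : continuity f -> forall x eps, 0 < eps ->
  exists d, 0 < d /\ forall y, Rabs (y - x) < d -> Rabs (f y - f x) < eps.
Proof.
  intros Hc x eps He. destruct (Hc x eps He) as [d [Hd H]].
  exists d; split; [lra|]. intros y Hy.
  destruct (Req_dec y x) as [->|Hne].
  - unfold Rminus; rewrite Rplus_opp_r, Rabs_R0; lra.
  - apply (H y). split; [split; [exact I| auto]|]. exact Hy.
Qed.

Lemma eps_contpt (f : R -> R) x : (forall eps, 0 < eps ->
  exists d, 0 < d /\ forall y, Rabs (y - x) < d -> Rabs (f y - f x) < eps) ->
  continuity_pt f x.
Proof.
  intros H eps He. destruct (H eps He) as [d [Hd H']].
  exists d; split; [lra|]. intros y [_ Hy]. apply H'. exact Hy.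
Qed.

Lemma qdist_small p q e : 0 < e ->
  Rabs (q0 p - q0 q) < e/2 -> Rabs (q1 p - q1 q) < e/2 ->
  Rabs (q2 p - q2 q) < e/2 -> Rabs (q3 p - q3 q) < e/2 -> qdist p q < e.
Proof.
  intros He H0 H1 H2 H3. unfold qdist.
  rewrite <- (sqrt_pow2 e) by lra.
  apply sqrt_lt_1_alt.
  set (a := q0 p - q0 q) in *. set (b := q1 p - q1 q) in *.
  set (c := q2 p - q2 q) in *. set (d := q3 p - q3 q) in *.
  rewrite <- (pow2_abs a), <- (pow2_abs b), <- (pow2_abs c), <- (pow2_abs d).
  pose proof (Rabs_pos a). pose proof (Rabs_pos b).
  pose proof (Rabs_pos c). pose proof (Rabs_pos d).
  split; [nra|]. nra.
Qed.

Definition cont4 (g : R -> quat) : Prop :=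
  continuity (fun s => q0 (g s)) /\ continuity (fun s => q1 (g s)) /\
  continuity (fun s => q2 (g s)) /\ continuity (fun s => q3 (g s)).

Lemma path_cont g : cont4 g -> forall t eps, 0 < eps ->
  exists d, 0 < d /\ forall s, Rabs (s - t) < d -> qdist (g s) (g t) < eps.
Proof.
  intros [C0 [C1 [C2 C3]]] t eps He.
  assert (He2 : 0 < eps/2) by lra.
  destruct (cont_eps _ C0 t _ He2) as [d0 [Hd0 E0]].
  destruct (cont_eps _ C1 t _ He2) as [d1 [Hd1 E1]].
  destruct (cont_eps _ C2 t _ He2) as [d2 [Hd2 E2]].
  destruct (cont_eps _ C3 t _ He2) as [d3 [Hd3 E3]].
  exists (Rmin (Rmin d0 d1) (Rmin d2 d3)). split.
  - repeat apply Rmin_pos; auto.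
  - intros s Hs.
    assert (Rmin (Rmin d0 d1) (Rmin d2 d3) <= d0) by
      (eapply Rle_trans; [apply Rmin_l|apply Rmin_l]).
    assert (Rmin (Rmin d0 d1) (Rmin d2 d3) <= d1) by
      (eapply Rle_trans; [apply Rmin_l|apply Rmin_r]).
    assert (Rmin (Rmin d0 d1) (Rmin d2 d3) <= d2) by
      (eapply Rle_trans; [apply Rmin_r|apply Rmin_l]).
    assert (Rmin (Rmin d0 d1) (Rmin d2 d3) <= d3) by
      (eapply Rle_trans; [apply Rmin_r|apply Rmin_r]).
    apply qdist_small; auto.
    + apply E0; lra. + apply E1; lra. + apply E2; lra. + apply E3; lra.
Qed.

Lemma path_connected (A : quat -> Prop) :
  (forall p q, A p -> A q -> exists g, cont4 g /\ g 0 = p /\ g 1 = q /\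
     forall s, 0 <= s <= 1 -> A (g s)) -> connected_H A.
Proof.
  intros HP U V HU HV Hcov Hdis [p [Ap Up]] [q [Aq Vq]].
  destruct (HP p q Ap Aq) as [g [Cg [G0 [G1 GA]]]].
  set (E := fun t => 0 <= t <= 1 /\ forall s, 0 <= s <= t -> U (g s)).
  assert (Hb : bound E) by (exists 1; intros t [Ht _]; lra).
  assert (E0 : E 0).
  { split; [lra|]. intros s Hs. replace s with 0 by lra. rewrite G0; auto. }
  destruct (completeness E Hb (ex_intro _ 0 E0)) as [c [Hub Hlub]].
  assert (c0 : 0 <= c) by (apply Hub; auto).
  assert (c1 : c <= 1) by (apply Hlub; intros t [Ht _]; lra).
  assert (Hex : forall s, s < c -> exists t, E t /\ s < t).
  { intros s Hs. apply NNPP; intro Hn. assert (c <= s); [|lra].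
    apply Hlub. intros t Et. apply Rnot_lt_le. intro Hst. apply Hn. eauto. }
  destruct (Hcov (g c) (GA c (conj c0 c1))) as [Uc|Vc].
  - destruct (HU _ Uc) as [eps [Heps HUe]].
    destruct (path_cont g Cg c eps Heps) as [d [Hd Hgd]].
    destruct (Req_dec c 1) as [Hc1|Hc1].
    + apply (Hdis q); auto. rewrite <- G1, <- Hc1; auto.
    + set (c' := Rmin 1 (c + d/2)).
      assert (Hc' : c < c' /\ c' <= 1 /\ c' <= c + d/2).
      { unfold c'; split; [apply Rmin_glb_lt; lra|]. split; [apply Rmin_l|apply Rmin_r]. }
      assert (E c').
      { split; [lra|]. intros s Hs.
        destruct (Rlt_or_le s c) as [Hsc|Hsc].
        - destruct (Hex s Hsc) as [t [[_ Et] Hst]]. apply Et; lra.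
        - apply HUe. apply Hgd. rewrite Rabs_right; lra. }
      assert (c' <= c) by (apply Hub; auto). lra.
  - destruct (HV _ Vc) as [eps [Heps HVe]].
    destruct (path_cont g Cg c eps Heps) as [d [Hd Hgd]].
    destruct (Hex (c - d) ltac:(lra)) as [t [[Ht Et] Htd]].
    assert (t <= c) by (apply Hub; split; auto).
    apply (Hdis (g t)).
    + apply GA; lra.
    + apply Et; lra.
    + apply HVe, Hgd. rewrite Rabs_left1; lra.
Qed.

Lemma angle_conn (A : quat -> Prop) I z a :
  (forall q, A q <-> exists r t, 0 < r /\ Rabs t < a /\ q = rexpI r I (z + t)) ->
  connected_H A.
Proof.
  intros HA. apply path_connected. intros p q Ap Aq.
  destruct (proj1 (HA p) Ap) as [r1 [t1 [Hr1 [Ht1 ->]]]].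
  destruct (proj1 (HA q) Aq) as [r2 [t2 [Hr2 [Ht2 ->]]]].
  exists (fun s => rexpI (r1 + s*(r2-r1)) I (z + (t1 + s*(t2-t1)))).
  split; [|split; [|split]].
  - unfold cont4, rexpI, qadd, qreal, qscal; simpl. repeat split; reg.
  - f_equal; f_equal; ring.
  - f_equal; f_equal; ring.
  - intros s Hs. apply HA. exists (r1 + s*(r2-r1)), (t1 + s*(t2-t1)).
    split; [nra|]. split; [|reflexivity].
    apply Rabs_def2 in Ht1. apply Rabs_def2 in Ht2.
    assert (0 <= (1-s)*(a - t1)) by (apply Rmult_le_pos; lra).
    assert (0 <= s*(a - t2)) by (apply Rmult_le_pos; lra).
    assert (0 <= (1-s)*(a + t1)) by (apply Rmult_le_pos; lra).
    assert (0 <= s*(a + t2)) by (apply Rmult_le_pos; lra).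
    destruct (Req_dec s 0) as [->|Hs0].
    + apply Rabs_def1; lra.
    + assert (0 < s*(a - t2)) by (apply Rmult_lt_0_compat; lra).
      assert (0 < s*(a + t2)) by (apply Rmult_lt_0_compat; lra).
      apply Rabs_def1; nra.
Qed.

Definition qneg (I : quat) := mkH (q0 I) (- q1 I) (- q2 I) (- q3 I).

Lemma in_S_neg I : in_S I -> in_S (qneg I).
Proof. unfold in_S, qneg; simpl. intros [H1 H2]. split; [auto|]. nra. Qed.

Lemma L_neg I q : in_S I -> L I q -> L (qneg I) q.
Proof.
  intros [HI _] [a [b ->]]. exists a, (-b). unfold qadd, qreal, qscal, qneg; simpl.
  rewrite HI. f_equal; ring.
Qed.

Lemma real_in_L I x : is_real_q x -> L I x.
Proof.
  intros [H1 [H2 H3]]. exists (q0 x), 0. destruct x as [a b c d]; simpl in *; subst.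
  unfold qadd, qreal, qscal; simpl. f_equal; ring.
Qed.

Lemma cover q : exists I, in_S I /\ L I q.
Proof.
  destruct q as [a b c d].
  destruct (Req_dec (b^2 + c^2 + d^2) 0) as [H0|H0].
  - exists (mkH 0 1 0 0). split; [unfold in_S; simpl; split; [auto|ring]|].
    exists a, 0. unfold qadd, qreal, qscal; simpl.
    assert (b = 0) by nra. assert (c = 0) by nra. assert (d = 0) by nra. subst.
    f_equal; ring.
  - assert (Hp : 0 < b^2 + c^2 + d^2) by (assert (0 <= b^2+c^2+d^2) by nra; lra).
    set (n := sqrt (b^2 + c^2 + d^2)).
    assert (Hn : 0 < n) by (apply sqrt_lt_R0; auto).
    assert (Hn2 : n * n = b^2 + c^2 + d^2) by (apply sqrt_sqrt; lra).
    exists (mkH 0 (b/n) (c/n) (d/n)). split.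
    + unfold in_S; simpl. split; [auto|]. field_simplify; [|lra].
      rewrite <- Hn2. field. lra.
    + exists a, n. unfold qadd, qreal, qscal; simpl. f_equal; field; lra.
Qed.

Lemma rexpI_real_part r J t k :
  (k = q1 \/ k = q2 \/ k = q3) -> k (rexpI r J t) = r * sin t * k J.
Proof. intros [ H | [ H | H ] ]; subst k; unfold rexpI, qadd, qreal, qscal; simpl; ring. Qed.

Section RP.
Variables (Omega : quat -> Prop) (zeta phi : quat -> R).
Hypothesis HA : forall I, in_S I ->
     0 < phi I < 2 * PI /\
     (forall q, (Omega q /\ L I q) <->
        exists r t, 0 < r /\ Rabs t < phi I / 2 /\ q = rexpI r I (zeta I + t)).
Hypothesis Hz : continuous_on_S zeta.

Lemma in_slice J u r : in_S J -> 0 < r -> Rabs u < phi J / 2 ->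
  Omega (rexpI r J (zeta J + u)).
Proof.
  intros HJ Hr Hu. apply (proj2 (HA J HJ)). exists r, u. auto.
Qed.

Lemma zero_real J u : in_S J -> Rabs u < phi J / 2 -> sin (zeta J + u) = 0 ->
  exists q, Omega q /\ is_real_q q.
Proof.
  intros HJ Hu Hs. exists (rexpI 1 J (zeta J + u)). split.
  - apply in_slice; auto; lra.
  - unfold is_real_q. rewrite !rexpI_real_part by auto. rewrite Hs.
    repeat split; ring.
Qed.

Hypothesis NR : ~ exists q, Omega q /\ is_real_q q.

Lemma sgn J t : in_S J -> Rabs t < phi J / 2 -> sin (zeta J + t) * sin (zeta J) > 0.
Proof.
  intros HJ Ht. destruct (HA J HJ) as [[Hp _] _].
  assert (H0 : sin (zeta J) <> 0).
  { intro H. apply NR. apply (zero_real J 0); auto.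
    rewrite Rabs_R0; lra. rewrite Rplus_0_r; auto. }
  apply Rnot_le_lt. intro Hle.
  set (f := fun s => sin (zeta J + s * t) * sin (zeta J)).
  assert (Cf : continuity f) by (unfold f; reg).
  assert (Hf : f 0 * f 1 <= 0).
  { unfold f. rewrite Rmult_0_l, Rplus_0_r, Rmult_1_l.
    assert (0 < sin (zeta J) * sin (zeta J)).
    { destruct (Rlt_or_le 0 (sin (zeta J))); [nra|].
      assert (sin (zeta J) < 0) by lra. nra. }
    nra. }
  destruct (IVT_cor f 0 1 Cf ltac:(lra) Hf) as [z [Hz01 Hfz]].
  unfold f in Hfz. apply Rmult_integral in Hfz. destruct Hfz as [Hfz|Hfz]; [|auto].
  apply NR. apply (zero_real J (z * t)); auto.
  rewrite Rabs_mult. rewrite (Rabs_right z) by lra.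
  pose proof (Rabs_pos t). nra.
Qed.

Lemma opp_sign I : in_S I -> sin (zeta I) * sin (zeta (qneg I)) < 0.
Proof.
  intros HI. pose proof (in_S_neg I HI) as HnI.
  destruct (HA I HI) as [[Hp _] _].
  assert (Hp0 : Omega (rexpI 1 I (zeta I + 0))) by (apply in_slice; auto; try rewrite Rabs_R0; lra).
  assert (HL : L I (rexpI 1 I (zeta I + 0))).
  { unfold rexpI. exists (1 * cos (zeta I + 0)), (1 * sin (zeta I + 0)). reflexivity. }
  destruct (proj1 (proj2 (HA _ HnI) _) (conj Hp0 (L_neg I _ HI HL))) as [r [t [Hr [Ht Heq]]]].
  pose proof (sgn _ _ HnI Ht) as Hsg.
  rewrite Rplus_0_r in Heq.
  assert (E1 := f_equal q1 Heq). assert (E2 := f_equal q2 Heq). assert (E3 := f_equal q3 Heq).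
  rewrite !rexpI_real_part in E1, E2, E3 by auto.
  change (q1 (qneg I)) with (- q1 I) in E1. change (q2 (qneg I)) with (- q2 I) in E2. change (q3 (qneg I)) with (- q3 I) in E3.
  destruct HI as [_ HI].
  set (x := sin (zeta I)) in *. set (y := sin (zeta (qneg I) + t)) in *.
  assert (Hxy : x = - r * y).
  { replace x with (x * (q1 I ^ 2 + q2 I ^ 2 + q3 I ^ 2)) by (rewrite HI; ring).
    replace (-r*y) with (-r*y * (q1 I ^ 2 + q2 I ^ 2 + q3 I ^ 2)) by (rewrite HI; ring).
    transitivity ((1*x*q1 I)*q1 I + (1*x*q2 I)*q2 I + (1*x*q3 I)*q3 I); [ring|].
    rewrite E1, E2, E3. ring. }
  rewrite Hxy. nra.
Qed.

Definition gam (t : R) : quat := mkH 0 (cos (PI * t)) (sin (PI * t)) 0.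

Lemma gam_S t : in_S (gam t).
Proof. unfold in_S, gam; simpl. split; [auto|]. pose proof (sin2_cos2 (PI*t)).
  unfold Rsqr in H. nra. Qed.

Lemma real_point : False.
Proof.
  set (h := fun t => sin (zeta (gam t))).
  assert (Cg : cont4 gam) by (unfold cont4, gam; simpl; repeat split; reg).
  assert (Ch : continuity h).
  { intro t. unfold h.
    apply (continuity_pt_comp (fun t => zeta (gam t)) sin).
    - apply eps_contpt. intros eps He.
      destruct (Hz (gam t) (gam_S t) eps He) as [d [Hd Hd']].
      destruct (path_cont gam Cg t d Hd) as [d2 [Hd2 Hd2']].
      exists d2. split; auto. intros y Hy. apply Hd'; auto. apply gam_S.
    - apply continuity_sin. }
  assert (Hh : h 0 * h 1 <= 0).
  { unfold h.
    replace (gam 0) with (mkH 0 1 0 0) by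
      (unfold gam; rewrite Rmult_0_r, cos_0, sin_0; reflexivity).
    replace (gam 1) with (qneg (mkH 0 1 0 0)) by
      (unfold gam, qneg; simpl; rewrite Rmult_1_r, cos_PI, sin_PI; f_equal; ring).
    apply Rlt_le, opp_sign. unfold in_S; simpl; split; [auto|ring]. }
  destruct (IVT_cor h 0 1 Ch ltac:(lra) Hh) as [z [_ Hz0]].
  apply NR. apply (zero_real (gam z) 0). apply gam_S.
  destruct (HA _ (gam_S z)) as [[Hp _] _]. rewrite Rabs_R0; lra.
  rewrite Rplus_0_r. exact Hz0.
Qed.
End RP.

Theorem proposition4p3 (Omega : quat -> Prop) (zeta phi : quat -> R) :
  open_H Omega ->
  (forall I, in_S I ->
     0 < phi I < 2 * PI /\
     (forall q, (Omega q /\ L I q) <->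
        exists r t, 0 < r /\ Rabs t < phi I / 2 /\ q = rexpI r I (zeta I + t))) ->
  continuous_on_S zeta ->
  continuous_on_S phi ->
  slice_domain Omega.
Proof.
  intros Hop HA Hz _.
  assert (Hreal : exists q, Omega q /\ is_real_q q).
  { apply NNPP; intro NR. exact (real_point Omega zeta phi HA Hz NR). }
  assert (Hconn : forall I, in_S I -> connected_H (fun q => Omega q /\ L I q)).
  { intros I HI. apply (angle_conn _ I (zeta I) (phi I / 2)).
    apply (proj2 (HA I HI)). }
  split; [split; [exact Hop|]|split; [exact Hreal|]].
  - intros U V HU HV Hcov Hdis [p [Op Up]] [q [Oq Vq]].
    destruct Hreal as [x [Ox Rx]].
    destruct (Hcov x Ox) as [Ux|Vx].
    + destruct (cover q) as [I [HI LI]].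
      apply (Hconn I HI U V HU HV).
      * intros y [Oy _]; auto.
      * intros y [Oy _]; eauto.
      * exists x; split; [split; [auto|apply real_in_L; auto]|auto].
      * exists q; auto.
    + destruct (cover p) as [I [HI LI]].
      apply (Hconn I HI U V HU HV).
      * intros y [Oy _]; auto.
      * intros y [Oy _]; eauto.
      * exists p; auto.
      * exists x; split; [split; [auto|apply real_in_L; auto]|auto].
  - intros I HI. split; [|apply Hconn; auto].
    split; [intros q [_ Hq]; auto|].
    intros q [Oq Lq]. destruct (Hop q Oq) as [eps [He Heps]].
    exists eps; split; auto.
Qed.
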